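(* For every $\Lambda>0$ there exists a smooth, positive, $\pi$-periodic function $f:\mathbb R\to(0,\infty)$ such that \[\int_0^{2\pi}\big|\partial_\theta\log f(\theta+\tfrac\pi2)-\partial_\theta\log f(\theta)\big|^2\big(f(\theta+\tfrac\pi2)+f(\theta)\big)d\theta<\Lambda\int_0^{2\pi}\frac{(f(\theta+\frac\pi2)-f(\theta))^2}{f(\theta+\frac\pi2)+f(\theta)}\,d\theta.\] *)

(* Defs.v *)
From Stdlib Require Import Reals.
From Coquelicot Require Import Coquelicot.
Open Scope R_scope.

Definition smooth (f : R -> R) : Prop := forall (n : nat) (x : R), ex_derive_n f n x.

Definition dlog (f : R -> R) (t : R) : R := Derive (fun s => ln (f s)) t.

(* Main.v *)
Require Import Defs.
From Stdlib Require Import Reals Lra Lia.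
From Coquelicot Require Import Coquelicot.
Open Scope R_scope.

Inductive P : (R -> R) -> Prop :=
| P_const : forall a, P (fun _ => a)
| P_cos : P (fun x => cos (2*x))
| P_sin : P (fun x => sin (2*x))
| P_plus : forall g h, P g -> P h -> P (fun x => g x + h x)
| P_mult : forall g h, P g -> P h -> P (fun x => g x * h x)
| P_inv : forall g, P g -> (forall x, g x <> 0) -> P (fun x => / g x)
| P_ext : forall g h, P g -> (forall x, g x = h x) -> P h.

Lemma P_der g : P g -> exists g', P g' /\ forall x, is_derive g x (g' x).
Proof.
induction 1.
- exists (fun _ => 0); split; [apply P_const|]. intros x; apply (is_derive_const a x).
- exists (fun x => -2 * sin (2*x)); split.
  + apply (P_mult (fun _ => -2) (fun x => sin (2*x))); constructor.
  + intros x; auto_derive; auto; ring.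
- exists (fun x => 2 * cos (2*x)); split.
  + apply (P_mult (fun _ => 2) (fun x => cos (2*x))); constructor.
  + intros x; auto_derive; auto; ring.
- destruct IHP1 as [g' [Pg' Dg]]; destruct IHP2 as [h' [Ph' Dh]].
  exists (fun x => g' x + h' x); split; [now apply P_plus|].
  intros x; apply (is_derive_plus g h x); auto.
- destruct IHP1 as [g' [Pg' Dg]]; destruct IHP2 as [h' [Ph' Dh]].
  exists (fun x => g' x * h x + g x * h' x); split.
  + apply P_plus; apply P_mult; auto.
  + intros x; apply (is_derive_mult g h x); auto. intros; apply Rmult_comm.
- destruct IHP as [g' [Pg' Dg]].
  exists (fun x => - g' x * / g x * / g x); split.
  + apply P_mult; [apply P_mult|]; try (apply P_inv; auto).
    apply (P_ext (fun x => (fun _ => -1) x * g' x)); [apply P_mult; auto; constructor|].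
    intros; ring.
  + intros x. eapply is_derive_ext. { intros t; reflexivity. }
    replace (- g' x * / g x * / g x) with (- g' x / g x ^ 2) by (field; auto).
    apply is_derive_inv; auto.
- destruct IHP as [g' [Pg' Dg]]. exists g'; split; auto.
  intros x; apply (is_derive_ext g h); auto.
Qed.

Lemma P_Dn n : forall g, P g -> exists h, P h /\ forall x, Derive_n g n x = h x.
Proof.
induction n; intros g Pg.
- exists g; split; auto.
- destruct (IHn g Pg) as [h [Ph E]].
  destruct (P_der h Ph) as [h' [Ph' Dh]].
  exists h'; split; auto. intros x; simpl.
  rewrite (Derive_ext _ _ x E). now apply is_derive_unique.
Qed.

Lemma P_smooth g : P g -> smooth g.
Proof.
intros Pg n x. destruct n; simpl; auto.
destruct (P_Dn n g Pg) as [h [Ph E]].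
destruct (P_der h Ph) as [h' [_ Dh]].
apply (ex_derive_ext h). { intros; now rewrite E. }
eexists; apply Dh.
Qed.

Lemma P_cont g : P g -> forall x, continuous g x.
Proof.
intros Pg x. destruct (P_der g Pg) as [g' [_ D]].
exact (@ex_derive_continuous R_AbsRing R_NormedModule g x (ex_intro _ _ (D x))).
Qed.

Lemma P_RInt g a b : P g -> ex_RInt g a b.
Proof. intros; apply (@ex_RInt_continuous R_CompleteNormedModule); intros; now apply P_cont. Qed.

Lemma P_minus g h : P g -> P h -> P (fun x => g x - h x).
Proof.
intros. apply (P_ext (fun x => g x + (fun _ => -1) x * h x)).
apply P_plus; auto; apply P_mult; auto; constructor. intros; simpl; ring.
Qed.

Lemma P_div g h : P g -> P h -> (forall x, h x <> 0) -> P (fun x => g x / h x).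
Proof. intros. apply P_mult; auto. apply P_inv; auto. Qed.

Lemma P_pow g n : P g -> P (fun x => g x ^ n).
Proof.
intros Pg; induction n.
- apply (P_ext (fun _ => 1)); [apply P_const|]; intros; simpl; ring.
- apply (P_ext (fun x => g x * g x ^ n)); [apply P_mult; auto|]. intros; simpl; ring.
Qed.

Lemma P_opp g : P g -> P (fun x => - g x).
Proof. intros. apply (P_ext (fun x => (fun _ => -1) x * g x)); [apply P_mult; auto; constructor|]. intros; simpl; ring. Qed.

Ltac solveP := repeat (first [apply P_cos | apply P_sin | apply P_const | apply P_plus
  | apply P_minus | apply P_opp | apply P_pow | apply P_div | apply P_mult]).

Lemma W m : RInt (fun x => sin(2*x)^2 * (cos(2*x)^2)^m) 0 (2*PI) * (2*INR m + 1)
  = RInt (fun x => (cos(2*x)^2)^(S m)) 0 (2*PI).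
Proof.
set (h := fun x => sin(2*x)*cos(2*x)*(cos(2*x)^2)^m).
set (f1 := fun x => (cos(2*x)^2)^(S m)).
set (f2 := fun x => sin(2*x)^2 * (cos(2*x)^2)^m).
set (dh := fun x => 2*f1 x - 2*(2*INR m+1)*f2 x).
assert (Hd : forall x, is_derive h x (dh x)).
{ intros x; unfold h, dh, f1, f2; auto_derive; auto.
  set (c := cos (2*x)); set (s := sin (2*x)).
  destruct m as [|k]; simpl pred.
  - simpl. ring.
  - rewrite S_INR. simpl. ring. }
assert (P1 : P f1) by (unfold f1; solveP).
assert (P2 : P f2) by (unfold f2; solveP).
assert (Hc : forall x, continuous dh x).
{ apply P_cont. unfold dh. solveP. all: auto. }
assert (H0 : is_RInt dh 0 (2*PI) (minus (h (2*PI)) (h 0))).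
{ apply (@is_RInt_derive R_CompleteNormedModule); intros; auto. }
assert (Eh : minus (h (2*PI)) (h 0) = 0).
{ unfold h. replace (2*(2*PI)) with (2*PI+2*PI) by ring.
  replace (2*0) with 0 by ring. rewrite sin_plus, sin_2PI, sin_0. unfold minus, plus, opp; simpl; ring. }
rewrite Eh in H0. apply (@is_RInt_unique R_CompleteNormedModule) in H0.
assert (E : RInt dh 0 (2*PI) = 2 * RInt f1 0 (2*PI) - 2*(2*INR m+1) * RInt f2 0 (2*PI)).
{ assert (X : RInt dh 0 (2*PI) = RInt (fun x => minus (scal 2 (f1 x)) (scal (2*(2*INR m+1)) (f2 x))) 0 (2*PI)).
  { apply RInt_ext; intros; reflexivity. }
  rewrite X.
  rewrite (@RInt_minus R_CompleteNormedModule (fun x => scal 2 (f1 x)) (fun x => scal (2*(2*INR m+1)) (f2 x))).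
  rewrite (@RInt_scal R_CompleteNormedModule f1), (@RInt_scal R_CompleteNormedModule f2).
  unfold minus, plus, opp, scal; simpl; unfold mult; simpl; ring.
  all: try (apply P_RInt; assumption).
  all: apply (@ex_RInt_scal R_CompleteNormedModule); apply P_RInt; assumption. }
fold f1 f2. rewrite H0 in E. lra.
Qed.

Definition I m := RInt (fun x => (cos(2*x)^2)^m) 0 (2*PI).

Lemma I_pos m : 0 < I m.
Proof.
induction m.
- unfold I. simpl. rewrite (@RInt_const R_CompleteNormedModule).
  unfold scal; simpl; unfold mult; simpl. generalize PI_RGT_0; lra.
- assert (E : I m = RInt (fun x => sin(2*x)^2 * (cos(2*x)^2)^m) 0 (2*PI) + I (S m)).
  { unfold I.
    assert (X : RInt (fun x => (cos(2*x)^2)^m) 0 (2*PI) =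
      RInt (fun x => plus (sin(2*x)^2 * (cos(2*x)^2)^m) ((cos(2*x)^2)^(S m))) 0 (2*PI)).
    { apply RInt_ext; intros x _. unfold plus; simpl.
      generalize (sin2_cos2 (2*x)); unfold Rsqr; intros H.
      set (y := (cos (2 * x) * (cos (2 * x) * 1)) ^ m).
      transitivity (y * (sin (2*x) * sin (2*x) + cos (2*x) * cos (2*x))).
      { rewrite H; ring. } unfold y; ring. }
    rewrite X. rewrite (@RInt_plus R_CompleteNormedModule (fun x => sin(2*x)^2 * (cos(2*x)^2)^m) (fun x => (cos(2*x)^2)^(S m))).
    reflexivity. all: apply P_RInt; solveP. }
  unfold I in *. rewrite <- W in E |- *.
  set (w := RInt (fun x => sin(2*x)^2 * (cos(2*x)^2)^m) 0 (2*PI)) in *.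
  assert (0 <= INR m) by apply pos_INR.
  rewrite E in IHm.
  assert (0 < w) by nra.
  apply Rmult_lt_0_compat; lra.
Qed.

Definition rho N e x := (cos(2*x)^2)^N + e.
Definition ff N e x := rho N e x * (2 - cos(2*x)).

Lemma cos_sh x : cos (2*(x+PI/2)) = - cos (2*x).
Proof. replace (2*(x+PI/2)) with (2*x+PI) by field. apply neg_cos. Qed.
Lemma sin_sh x : sin (2*(x+PI/2)) = - sin (2*x).
Proof. replace (2*(x+PI/2)) with (2*x+PI) by field. apply neg_sin. Qed.
Lemma cos_per x : cos (2*(x+PI)) = cos (2*x).
Proof. replace (2*(x+PI)) with (2*x+PI+PI) by field. rewrite !neg_cos. ring. Qed.

Lemma rho_pos N e x : 0 < e -> 0 < rho N e x.
Proof. intros. unfold rho. assert (0 <= (cos(2*x)^2)^N) by (apply pow_le; nra). lra. Qed.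

Lemma ff_pos N e x : 0 < e -> 0 < ff N e x.
Proof. intros. unfold ff. apply Rmult_lt_0_compat. now apply rho_pos. generalize (COS_bound (2*x)); lra. Qed.

Definition Dff N e x := INR N * (cos(2*x)^2)^(pred N) * (2*cos(2*x)*(-2*sin(2*x))) * (2 - cos(2*x))
   + rho N e x * (2*sin(2*x)).

Lemma dlog_ff N e x : 0 < e -> dlog (ff N e) x = Dff N e x / ff N e x.
Proof.
intros He. unfold dlog. apply is_derive_unique. unfold ff, rho. auto_derive.
- exact (ff_pos N e x He).
- unfold Dff, rho. assert (H1 := rho_pos N e x He); assert (H2 := COS_bound (2*x)); unfold rho in H1.
  simpl in *. field. split; lra.
Qed.

Definition G N e t := (2*sin(2*t)/(2+cos(2*t)) + 2*sin(2*t)/(2-cos(2*t)))^2 * (4*rho N e t).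

Lemma lhs_eq N e t : 0 < e ->
  (dlog (ff N e) (t + PI/2) - dlog (ff N e) t)^2 * (ff N e (t+PI/2) + ff N e t) = G N e t.
Proof.
intros He. rewrite !dlog_ff by auto.
assert (H1 := rho_pos N e t He); assert (H2 := COS_bound (2*t)).
unfold Dff, ff, G, rho in *. rewrite cos_sh, sin_sh.
replace ((- cos (2*t))^2) with (cos(2*t)^2) by ring.
set (c := cos (2*t)) in *. set (s := sin (2*t)). set (y := (c^2)^N) in *.
set (z := (c^2)^(pred N)).
field. repeat split; lra.
Qed.

Lemma G_bound N e t : 0 < e -> G N e t <= 29 * (sin(2*t)^2 * (cos(2*t)^2)^N + e).
Proof.
intros He. assert (H1 := rho_pos N e t He); assert (H2 := COS_bound (2*t)); assert (H3 := SIN_bound (2*t)).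
unfold G, rho in *.
set (c := cos (2*t)) in *. set (s := sin (2*t)) in *. set (y := (c^2)^N) in *.
assert (Hy : 0 <= y) by (unfold y; apply pow_le; nra).
replace ((2*s/(2+c) + 2*s/(2-c))^2 * (4*(y+e))) with ((s^2*(y+e)) * (256 / ((4 - c^2)^2))) by (assert (4 - c^2 <> 0) by nra; field; repeat split; try lra; try (apply pow_nonzero; auto)).
assert (Hq : 256 / ((4-c^2)^2) <= 29).
{ assert (c^2 <= 1) by nra. assert (3 <= 4 - c^2) by lra. assert (9 <= (4-c^2)^2) by nra. apply Rmult_le_reg_r with ((4-c^2)^2). nra.
  unfold Rdiv. rewrite Rmult_assoc, Rinv_l by nra. nra. }
assert (0 <= s^2*(y+e)) by nra.
assert (0 <= s^2*(y+e)) by (apply Rmult_le_pos; [apply pow2_ge_0|lra]). assert (s^2 <= 1) by nra.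
nra.
Qed.

Lemma rhs_eq N e t : 0 < e ->
  (ff N e (t+PI/2) - ff N e t)^2 / (ff N e (t+PI/2) + ff N e t) = rho N e t * cos(2*t)^2.
Proof.
intros He. assert (H1 := rho_pos N e t He); assert (H2 := COS_bound (2*t)).
unfold ff, rho in *. rewrite cos_sh.
replace ((- cos (2*t))^2) with (cos(2*t)^2) by ring.
set (c := cos (2*t)) in *. set (y := (c^2)^N) in *.
field. lra.
Qed.

Lemma rhs_bound N e t : 0 < e -> (cos(2*t)^2)^(S N) <= rho N e t * cos(2*t)^2.
Proof.
intros He. unfold rho. change ((cos(2*t)^2)^(S N)) with (cos(2*t)^2 * (cos(2*t)^2)^N).
assert (0 <= e * cos(2*t)^2) by (apply Rmult_le_pos; [lra|apply pow2_ge_0]).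
rewrite Rmult_plus_distr_r. lra.
Qed.

Theorem lemma8p1 :
  forall Lambda : R, 0 < Lambda ->
  exists f : R -> R,
    smooth f /\
    (forall x, 0 < f x) /\
    (forall x, f (x + PI) = f x) /\
    RInt (fun t => (dlog f (t + PI / 2) - dlog f t) ^ 2 * (f (t + PI / 2) + f t)) 0 (2 * PI)
    < Lambda * RInt (fun t => (f (t + PI / 2) - f t) ^ 2 / (f (t + PI / 2) + f t)) 0 (2 * PI).
Proof.
intros L HL.
destruct (archimed_cor1 (L/58)) as [N [HN HN0]]; [lra|].
assert (HPI := PI_RGT_0).
assert (HJ := I_pos (S N)).
set (J := I (S N)) in *.
set (e := L*J/(232*PI)).
assert (He : 0 < e) by (unfold e; apply Rdiv_lt_0_compat; nra).
exists (ff N e). split; [|split; [|split]].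
- apply P_smooth. unfold ff, rho. solveP.
- intros; now apply ff_pos.
- intros x; unfold ff, rho; rewrite cos_per; reflexivity.
- assert (EL : RInt (fun t => (dlog (ff N e) (t + PI / 2) - dlog (ff N e) t) ^ 2 * (ff N e (t + PI / 2) + ff N e t)) 0 (2*PI) = RInt (G N e) 0 (2*PI)).
  { apply RInt_ext; intros; apply lhs_eq; auto. }
  assert (ER : RInt (fun t => (ff N e (t + PI / 2) - ff N e t) ^ 2 / (ff N e (t + PI / 2) + ff N e t)) 0 (2*PI) = RInt (fun t => rho N e t * cos(2*t)^2) 0 (2*PI)).
  { apply RInt_ext; intros; apply rhs_eq; auto. }
  rewrite EL, ER.
  set (f2 := fun t => sin(2*t)^2 * (cos(2*t)^2)^N).
  assert (P2 : P f2) by (unfold f2; solveP).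
  assert (L1 : RInt (G N e) 0 (2*PI) <= RInt (fun t => scal 29 (plus (f2 t) ((fun _ => e) t))) 0 (2*PI)).
  { apply RInt_le.
    - lra.
    - apply P_RInt. unfold G, rho. solveP; intros x; generalize (COS_bound (2*x)); lra.
    - apply P_RInt. apply P_mult; [apply P_const|]. apply P_plus; auto; apply P_const.
    - intros; apply G_bound; auto. }
  rewrite (@RInt_scal R_CompleteNormedModule (fun t => plus (f2 t) ((fun _ => e) t))) in L1.
  rewrite (@RInt_plus R_CompleteNormedModule f2 (fun _ => e)) in L1.
  rewrite (@RInt_const R_CompleteNormedModule) in L1.
  2,3: apply P_RInt; auto; apply P_const.
  2: apply (@ex_RInt_plus R_CompleteNormedModule); apply P_RInt; auto; apply P_const.
  unfold scal, plus in L1; simpl in L1; unfold mult in L1; simpl in L1.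
  assert (R1 : J <= RInt (fun t => rho N e t * cos(2*t)^2) 0 (2*PI)).
  { unfold J, I. apply RInt_le.
    - lra.
    - apply P_RInt; solveP.
    - apply P_RInt; unfold rho; solveP.
    - intros; apply rhs_bound; auto. }
  assert (HW : RInt f2 0 (2*PI) * (2*INR N+1) = J) by (unfold J, I, f2; apply W).
  set (w := RInt f2 0 (2*PI)) in *.
  set (R := RInt (fun t => rho N e t * cos(2*t)^2) 0 (2*PI)) in *.
  assert (HN1 : 0 < INR N) by (apply lt_0_INR; lia).
  assert (H58 : 58 < L * INR N).
  { apply (Rmult_lt_compat_r (INR N)) in HN; auto. rewrite Rinv_l in HN by lra. nra. }
  assert (Hw : 0 < w) by nra.
  assert (A1 : 58 * w < L * J) by nra.
  assert (A2 : 29 * ((2*PI - 0) * e) = L * J / 4) by (unfold e; field; lra).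
  assert (A3 : L * J <= L * R) by nra.
  lra.
Qed.
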